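(* For a ring $R$ the following are equivalent: (1) every right $R$-module of finite composition length is a homomorphic image of an injective right $R$-module; (2) $R_R\in \underline{\mathfrak{In}}^{-1}(A)$ for every right $R$-module $A$ of finite length; (3) every projective right $R$-module $P$ satisfies $P\in \underline{\mathfrak{In}}^{-1}(A)$ for every right $R$-module $A$ of finite length.
   Context: For right $R$-modules $X,Y$, $X\in \underline{\mathfrak{In}}^{-1}(Y)$ means: for every module $C$ containing $X$ as a submodule, every homomorphism $X\to Y$ extends to a homomorphism $C\to Y$. *)

(* Defs.v *)
From HB Require Import structures.
From mathcomp Require Import all_boot all_algebra.
Set Implicit Arguments. Unset Strict Implicit. Unset Printing Implicit Defensive.
Import GRing.Theory.
Local Open Scope ring_scope.

(* Right R-modules are modelled as left modules over the converse ring R^c: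
   a *: x (a : R^c) stands for the right action x . a. *)
Notation rmodType R := (lmodType (R^c)%type).

(* R_R: the ring R regarded as a right module over itself. *)
Notation RR R := ((R^c)^o)%type.

Section Defs.
Variable R : nzRingType.

Definition is_submod (M : rmodType R) (S : M -> Prop) :=
  S 0 /\ forall (a : R^c) (x y : M), S x -> S y -> S (a *: x + y).

Definition incl (M : Type) (S T : M -> Prop) := forall x, S x -> T x.

Definition strict_incl (M : Type) (S T : M -> Prop) :=
  incl S T /\ exists x, T x /\ ~ S x.

Definition finite_length (M : rmodType R) :=
  exists (n : nat) (S : nat -> M -> Prop),
    [/\ (forall i, is_submod (S i)),
        (forall x, S 0%N x <-> x = 0),
        (forall x, S n x) &
        (forall i, (i < n)%N ->
           strict_incl (S i) (S i.+1) /\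
           forall T, is_submod T -> incl (S i) T -> incl T (S i.+1) ->
             incl T (S i) \/ incl (S i.+1) T)].

Definition InInv (X Y : rmodType R) :=
  forall (C : rmodType R) (i : {linear X -> C}), injective i ->
  forall f : {linear X -> Y}, exists g : {linear C -> Y}, forall x, g (i x) = f x.

Definition injective_module (E : rmodType R) :=
  forall (X C : rmodType R) (i : {linear X -> C}), injective i ->
  forall f : {linear X -> E}, exists g : {linear C -> E}, forall x, g (i x) = f x.

Definition projective_module (P : rmodType R) :=
  forall (B C : rmodType R) (p : {linear B -> C}), (forall c, exists b, p b = c) ->
  forall f : {linear P -> C}, exists g : {linear P -> B}, forall x, p (g x) = f x.

End Defs.

(* Main.v *)
Require Import Defs.
From HB Require Import structures.
From mathcomp Require Import all_boot all_algebra.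
From mathcomp Require Import boolp classical_sets lra.
Set Implicit Arguments. Unset Strict Implicit. Unset Printing Implicit Defensive.
Import GRing.Theory Num.Theory.
Local Open Scope ring_scope.

Definition frac (q : rat) : rat := q - (Num.floor q)%:~R.

Lemma floor_frac q : Num.floor (frac q) == 0.
Proof.
rewrite /frac -intrN floorDrz ?intr_int //.
by rewrite intrKfloor subrr.
Qed.

Definition QZ := {q : rat | Num.floor q == 0}.
HB.instance Definition _ := Choice.copy QZ {q : rat | Num.floor q == 0}.
Definition toQZ (q : rat) : QZ := exist _ (frac q) (floor_frac q).

Lemma fracDz q n : frac (q + n%:~R) = frac q.
Proof.
rewrite /frac floorDrz ?intr_int // intrKfloor intrD; lra.
Qed.

Lemma toQZDz q n : toQZ (q + n%:~R) = toQZ q.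
Proof. by apply: val_inj; rewrite /= fracDz. Qed.

Lemma valK (x : QZ) : toQZ (val x) = x.
Proof.
apply: val_inj; rewrite /= /frac; case: x => q /= /eqP ->; lra.
Qed.

Lemma toQZ_valD a b : toQZ (val (toQZ a) + b) = toQZ (a + b).
Proof.
by rewrite /= /frac addrAC -intrN toQZDz.
Qed.

Definition qadd (x y : QZ) := toQZ (val x + val y).
Definition qopp (x : QZ) := toQZ (- val x).
Definition qzero : QZ := toQZ 0.

Lemma toQZ_add a b : qadd (toQZ a) (toQZ b) = toQZ (a + b).
Proof. by rewrite /qadd toQZ_valD addrC toQZ_valD addrC. Qed.
Lemma toQZ_opp a : qopp (toQZ a) = toQZ (- a).
Proof. by rewrite /qopp /= /frac opprB addrC toQZDz. Qed.

Lemma QZ_ind (P : QZ -> Prop) : (forall a, P (toQZ a)) -> forall x, P x.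
Proof. by move=> H x; rewrite -(valK x). Qed.

Lemma qaddA : associative qadd.
Proof.
by elim/QZ_ind=> a; elim/QZ_ind=> b; elim/QZ_ind=> c; rewrite !toQZ_add addrA.
Qed.
Lemma qaddC : commutative qadd.
Proof. by elim/QZ_ind=> a; elim/QZ_ind=> b; rewrite !toQZ_add addrC. Qed.
Lemma qadd0 : left_id qzero qadd.
Proof. by elim/QZ_ind=> a; rewrite /qzero toQZ_add add0r. Qed.
Lemma qaddN : left_inverse qzero qopp qadd.
Proof. by elim/QZ_ind=> a; rewrite toQZ_opp toQZ_add addNr. Qed.

HB.instance Definition _ := GRing.isZmodule.Build QZ qaddA qaddC qadd0 qaddN.

Lemma toQZD a b : toQZ (a + b) = toQZ a + toQZ b.
Proof. by rewrite -toQZ_add. Qed.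
Lemma toQZ0 : toQZ 0 = 0. Proof. by []. Qed.
Lemma toQZMn a n : toQZ (a *+ n) = toQZ a *+ n.
Proof. by elim: n => [|n IH]; rewrite ?mulr0n // !mulrS toQZD IH. Qed.
Lemma toQZ_int n : toQZ n%:~R = 0.
Proof. by rewrite -(add0r n%:~R) toQZDz. Qed.

Lemma QZ_div (y : QZ) (n : nat) : (0 < n)%N -> exists d : QZ, d *+ n = y.
Proof.
move=> n0; elim/QZ_ind: y => a; exists (toQZ (a / n%:R)).
rewrite -toQZMn -(mulr_natr (a / n%:R)) mulfVK //; by rewrite pnatr_eq0 -lt0n.
Qed.

Lemma QZ_sep (n : nat) : (1 < n)%N -> toQZ (n%:R^-1) != 0 /\ toQZ (n%:R^-1) *+ n = 0.
Proof.
move=> n1; split; last first.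
  by rewrite -toQZMn -(mulr_natr (n%:R^-1)) mulVf ?pnatr_eq0 -?lt0n ?(ltn_trans _ n1)// -(toQZ_int 1).
apply/eqP => /(congr1 val) /=; rewrite /frac.
have -> : Num.floor (n%:R^-1 : rat) = 0.
  apply/eqP; rewrite floor_eq /= add0r; apply/andP; split.
    by rewrite invr_ge0 ler0n.
  by rewrite invf_lt1 ?ltr0n ?(ltn_trans _ n1) // ltr1n.
rewrite subr0 => /eqP; rewrite invr_eq0 pnatr_eq0; by case: n n1.
Qed.

Section Ext.
Variables (C D : zmodType).

Definition subgrp (B : C -> Prop) := B 0 /\ forall x y, B x -> B y -> B (x - y).
Definition addon (B : C -> Prop) (h : C -> D) :=
  forall x y, B x -> B y -> h (x - y) = h x - h y.

Section Basic.
Variables (B : C -> Prop) (h : C -> D) (sB : subgrp B) (hB : addon B h).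

Lemma sgN x : B x -> B (- x).
Proof. by move=> Bx; rewrite -sub0r; apply: sB.2 => //; exact: sB.1. Qed.
Lemma sgD x y : B x -> B y -> B (x + y).
Proof. by move=> Bx By; rewrite -(opprK y); apply: sB.2 => //; exact: sgN. Qed.
Lemma sgMn x n : B x -> B (x *+ n).
Proof. by move=> Bx; elim: n => [|n IH]; [rewrite mulr0n; exact: sB.1| rewrite mulrS; exact: sgD]. Qed.
Lemma sgMz x k : B x -> B (x *~ k).
Proof.
move=> Bx; case: k => n; first by rewrite -pmulrn; exact: sgMn.
by rewrite NegzE mulrNz; apply: sgN; rewrite -pmulrn; exact: sgMn.
Qed.
Lemma ah0 : h 0 = 0.
Proof. by have := hB sB.1 sB.1; rewrite subrr => ->; rewrite subrr. Qed.
Lemma ahN x : B x -> h (- x) = - h x.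
Proof. by move=> Bx; rewrite -sub0r hB ?ah0 ?sub0r //; exact: sB.1. Qed.
Lemma ahD x y : B x -> B y -> h (x + y) = h x + h y.
Proof. by move=> Bx By; rewrite -(opprK y) hB ?ahN ?opprK //; exact: sgN. Qed.
Lemma ahMn x n : B x -> h (x *+ n) = h x *+ n.
Proof.
move=> Bx; elim: n => [|n IH]; first by rewrite !mulr0n ah0.
by rewrite !mulrS ahD ?IH //; exact: sgMn.
Qed.
Lemma ahMz x k : B x -> h (x *~ k) = h x *~ k.
Proof.
move=> Bx; case: k => n; first by rewrite -!pmulrn ahMn.
by rewrite NegzE !mulrNz ahN -?pmulrn ?ahMn //; apply: sgMn.
Qed.
End Basic.

Lemma ideal (B : C -> Prop) (sB : subgrp B) (c : C) :
  (forall k, B (c *~ k) -> k = 0) \/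
  exists n, [/\ (0 < n)%N, B (c *+ n) & forall k, B (c *~ k) -> exists q, k = q * n%:Z].
Proof.
case: (pselect (exists n, (0 < n)%N /\ B (c *+ n))) => [ex|nex]; [right|left].
  have ex' : exists n, (0 < n)%N && `[< B (c *+ n) >].
    by case: ex => n [n0 Bn]; exists n; rewrite n0; apply/asboolP.
  case: (ex_minnP ex') => n /andP[n0 /asboolP Bn] minn.
  exists n; split => // k Bk.
  exists (k %/ n)%Z.
  have nz : n%:Z != 0 by rewrite eqz_nat -lt0n.
  have ek := divz_eq k n.
  set r := (k %% n)%Z in ek.
  have r0 : 0 <= r by apply: modz_ge0.
  have rn : r < n%:Z by have := ltz_mod k nz.
  suff r00 : r = 0 by rewrite {1}ek r00 addr0.
  have Br : B (c *~ r).
    have -> : c *~ r = c *~ k - (c *+ n) *~ (k %/ n)%Z.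
      rewrite pmulrn mulrzA_C -mulrzBr; congr (_ *~ _).
    by apply: sB.2 => //; apply: sgMz.
  clear ek; clearbody r; move: r0 rn Br; case: r => // m _ rn Br.
  case: m rn Br => // m rn Br.
  have := minn m.+1; rewrite -pmulrn in Br.
  have : (0 < m.+1)%N && `[< B (c *+ m.+1) >] by apply/andP; split => //; apply/asboolP.
  move=> H /(_ H); rewrite leqNgt; move: rn; rewrite ltz_nat => -> //.
move=> k Bk; case: k Bk => n Bn.
  case: n Bn => // n Bn; exfalso; apply: nex; exists n.+1; split => //.
exfalso; apply: nex; exists n.+1; split => //.
rewrite NegzE mulrNz in Bn; have := sgN sB Bn; by rewrite opprK -pmulrn.
Qed.

Lemma onestep (B : C -> Prop) (h : C -> D) (c : C) (d : D) :
  subgrp B -> addon B h -> (forall k, B (c *~ k) -> h (c *~ k) = d *~ k) ->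
  exists (B' : C -> Prop) (h' : C -> D), [/\ subgrp B', addon B' h',
    (forall x, B x -> B' x /\ h' x = h x), B' c & h' c = d].
Proof.
move=> sB hB hc.
pose B' x := exists b k, B b /\ x = b + c *~ k.
pose h' x := if pselect (B' x) is left H then
   let: exist b Hb := cid H in let: exist k Hk := cid Hb in h b + d *~ k else 0.
have key : forall b k x, B b -> x = b + c *~ k -> h' x = h b + d *~ k.
  move=> b k x Bb ->; rewrite /h'; case: pselect => [H|H]; last first.
    by exfalso; apply: H; exists b, k.
  case: (cid H) => b' Hb'; case: (cid Hb') => k' [Bb' e].
  have e2 : c *~ (k' - k) = b - b'.
    by rewrite mulrzBr; apply/eqP; rewrite subr_eq addrAC e [b' + _]addrC addrK.
  have := hc (k' - k); rewrite e2 => /(_ (sB.2 _ _ Bb Bb')).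
  move=> E; rewrite hB // mulrzBr in E.
  by rewrite -[h b](subrK (h b')) E addrAC subrK addrC.
exists B', h'; split.
- split; first by exists 0, 0; split; [exact: sB.1| rewrite mulr0z addr0].
  move=> x y [b1 [k1 [B1 ->]]] [b2 [k2 [B2 ->]]].
  exists (b1 - b2), (k1 - k2); split; first exact: sB.2.
  by rewrite mulrzBr opprD !addrA; congr (_ + _); rewrite addrAC.
- move=> x y [b1 [k1 [B1 ex]]] [b2 [k2 [B2 ey]]].
  rewrite (key _ _ _ B1 ex) (key _ _ _ B2 ey) (key (b1 - b2) (k1 - k2)).
  + by rewrite hB // mulrzBr opprD !addrA; congr (_ + _); rewrite addrAC.
  + exact: sB.2.
  + by rewrite ex ey mulrzBr opprD !addrA; congr (_ + _); rewrite addrAC.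
- move=> x Bx; split; first by exists x, 0; rewrite mulr0z addr0.
  by rewrite (key x 0) ?mulr0z ?addr0.
- by exists 0, 1; split; [exact: sB.1|rewrite add0r mulr1z].
- rewrite (key 0 1); first by rewrite (ah0 sB hB) add0r mulr1z.
    exact: sB.1.
  by rewrite add0r mulr1z.
Qed.

Section Zorn.
Hypothesis Ddiv : forall (y : D) (n : nat), (0 < n)%N -> exists d : D, d *+ n = y.

Theorem ext_thm (B : C -> Prop) (f : C -> D) : subgrp B -> addon B f ->
  exists g : C -> D, (forall x y, g (x - y) = g x - g y) /\ forall x, B x -> g x = f x.
Proof.
move=> sB fB.
pose T := {p : (C -> Prop) * (C -> D) |
   [/\ subgrp p.1, addon p.1 p.2 & forall x, B x -> p.1 x /\ p.2 x = f x]}.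
pose r (p q : T) := `[< forall x, (sval p).1 x -> (sval q).1 x /\ (sval q).2 x = (sval p).2 x >].
have t0 : T by exists (B, f); split => //.
have [m mmax] : exists m, premaximal r m.
  apply: (ZL_preorder t0).
  - by move=> t; apply/asboolP.
  - move=> p q s /asboolP pq /asboolP qs; apply/asboolP => x /pq [/qs [? ->] ->]; done.
  move=> A Atot.
  case: (pselect (exists p, A p)) => [[p0 Ap0]|nA]; last first.
    by exists t0 => s As; exfalso; apply: nA; exists s.
  pose Bs x := exists p, A p /\ (sval p).1 x.
  pose hs x := if pselect (Bs x) is left H then (sval (proj1_sig (cid H))).2 x else 0.
  have hsE : forall p x, A p -> (sval p).1 x -> hs x = (sval p).2 x.
    move=> p x Ap px; rewrite /hs; case: pselect => [H|H]; last first.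
      by exfalso; apply: H; exists p.
    case: (cid H) => q [Aq qx] /=.
    by case: (Atot _ _ Ap Aq) => /asboolP H1; [case: (H1 _ px)| case: (H1 _ qx)].
  have comm : forall p q x y, A p -> A q -> (sval p).1 x -> (sval q).1 y ->
      exists s, [/\ A s, (sval s).1 x & (sval s).1 y].
    move=> p q x y Ap Aq px qy.
    case: (Atot _ _ Ap Aq) => /asboolP H1.
      by exists q; split => //; case: (H1 _ px).
    by exists p; split => //; case: (H1 _ qy).
  have sBs : subgrp Bs.
    split; first by exists p0; split => //; case: (svalP p0) => -[] //.
    move=> x y [p [Ap px]] [q [Aq qy]].
    case: (comm _ _ _ _ Ap Aq px qy) => s [As sx sy]; exists s; split => //.
    by case: (svalP s) => -[_ +] _ _; apply.
  have hsB : addon Bs hs.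
    move=> x y [p [Ap px]] [q [Aq qy]].
    case: (comm _ _ _ _ Ap Aq px qy) => s [As sx sy].
    case: (svalP s) => -[_ ssub] sadd _.
    by rewrite !(hsE s) // ?sadd //; apply: ssub.
  have Bsub : forall x, B x -> Bs x /\ hs x = f x.
    move=> x Bx; case: (svalP p0) => _ _ /(_ x Bx) [px fx].
    split; first by exists p0.
    by rewrite (hsE p0).
  exists (exist _ (Bs, hs) (And3 sBs hsB Bsub)) => s As; apply/asboolP => x sx /=.
  split; first by exists s.
  by rewrite (hsE s).
case: (svalP m) => sm hm mB.
suff all : forall x, (sval m).1 x.
  exists (sval m).2; split; first by move=> x y; apply: hm.
  by move=> x Bx; case: (mB x Bx).
move=> c; apply: contrapT => nc.
have [d hd] : exists d, forall k, (sval m).1 (c *~ k) -> (sval m).2 (c *~ k) = d *~ k.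
  case: (ideal sm c) => [H|[n [n0 Bn Hn]]].
    exists 0 => k /H ->; by rewrite !mulr0z (ah0 sm hm).
  case: (Ddiv ((sval m).2 (c *+ n)) n0) => d dn.
  exists d => k /Hn [q ->].
  by rewrite -mulrzA_C -pmulrn (ahMz sm hm) // -dn pmulrn mulrzA_C.
case: (onestep sm hm hd) => B' [h' [sB' hB' ext cB' _]].
have s_ok : [/\ subgrp B', addon B' h' & forall x, B x -> B' x /\ h' x = f x].
  split => // x Bx; case: (mB x Bx) => mx fx; case: (ext x mx) => ? ->; done.
have /mmax /asboolP : r m (exist _ (B', h') s_ok).
  by apply/asboolP => x /ext.
by move=> /(_ c cB') [].
Qed.
End Zorn.
End Ext.

Lemma sep (C : zmodType) (c : C) : c != 0 ->
  exists chi : C -> QZ, (forall x y, chi (x - y) = chi x - chi y) /\ chi c != 0.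
Proof.
move=> c0.
pose B0 := fun x : C => x = 0.
have sB0 : subgrp B0 by split => // x y -> ->; rewrite subrr.
have hB0 : addon B0 (fun _ => (0 : QZ)) by move=> *; rewrite subrr.
have [d [dn0 hd]] : exists d : QZ, d != 0 /\
    forall k, B0 (c *~ k) -> (fun _ => (0 : QZ)) (c *~ k) = d *~ k.
  case: (ideal sB0 c) => [H|[n [n0 Bn Hn]]].
    have [d0 _] := QZ_sep (isT : (1 < 2)%N).
    by exists (toQZ 2%:R^-1); split => // k /H ->; rewrite mulr0z.
  have n1 : (1 < n)%N.
    case: n n0 Bn {Hn} => // -[|n] // _; rewrite /B0 mulr1n => c00.
    by rewrite c00 eqxx in c0.
  have [d0 dn] := QZ_sep n1.
  exists (toQZ n%:R^-1); split => // k /Hn [q ->].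
  by rewrite -mulrzA_C -pmulrn dn mul0rz.
case: (onestep sB0 hB0 hd) => B' [h' [sB' hB' _ cB' h'c]].
case: (ext_thm QZ_div sB' hB') => chi [chiA chiB].
by exists chi; split => //; rewrite chiB // h'c.
Qed.

Lemma cogen (C : zmodType) : exists chi : C -> C -> QZ,
  (forall i x y, chi i (x - y) = chi i x - chi i y) /\ forall x, x != 0 -> chi x x != 0.
Proof.
have H : forall i : C, exists chi : C -> QZ,
    (forall x y, chi (x - y) = chi x - chi y) /\ (i != 0 -> chi i != 0).
  move=> i; case: (eqVneq i 0) => [->|i0].
    by exists (fun _ => 0); split => // *; rewrite subrr.
  by case: (sep i0) => chi [? ?]; exists chi.
exists (fun i => sval (cid (H i))); split.
  by move=> i; case: (svalP (cid (H i))).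
by move=> x; case: (svalP (cid (H x))).
Qed.

(* ---------- the injective module E = Hom_Z(R, QZ^R) ---------- *)
Section Inj.
Variable R : nzRingType.

Definition mklin (U V : lmodType R^c) (f : U -> V) (H : linear f) : {linear U -> V} :=
  HB.pack f (GRing.isLinear.Build _ _ _ _ f H).

Record Emod := MkE { ef : R -> R -> QZ ; eP : forall x y t, ef (x - y) t = ef x t - ef y t }.

HB.instance Definition _ := gen_eqMixin Emod.
HB.instance Definition _ := gen_choiceMixin Emod.

Lemma E_ext (p q : Emod) : (forall s t, ef p s t = ef q s t) -> p = q.
Proof.
case: p => f1 P1; case: q => f2 P2 /= H.
have e : f1 = f2 by apply: funext => s; apply: funext => t; apply: H.
subst f2; congr MkE; exact: Prop_irrelevance.
Qed.

Lemma ef0 (p : Emod) t : ef p 0 t = 0.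
Proof. by have := eP p 0 0 t; rewrite subrr => ->; rewrite subrr. Qed.
Lemma efN (p : Emod) x t : ef p (- x) t = - ef p x t.
Proof. by rewrite -sub0r eP ef0 sub0r. Qed.
Lemma efD (p : Emod) x y t : ef p (x + y) t = ef p x t + ef p y t.
Proof. by rewrite -{1}(opprK y) eP efN opprK. Qed.

Program Definition ezero := @MkE (fun _ _ => 0) _.
Program Definition eadd (p q : Emod) := @MkE (fun s t => ef p s t + ef q s t) _.
Next Obligation. by rewrite !eP opprD addrACA. Qed.
Program Definition eopp (p : Emod) := @MkE (fun s t => - ef p s t) _.
Next Obligation. by rewrite eP opprD. Qed.
Program Definition escale (a : R^c) (p : Emod) := @MkE (fun s t => ef p (@GRing.mul R a s) t) _.
Next Obligation. by rewrite mulrBr eP. Qed.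

Lemma eaddA : associative eadd.
Proof. by move=> p q r; apply: E_ext => s t /=; rewrite addrA. Qed.
Lemma eaddC : commutative eadd.
Proof. by move=> p q; apply: E_ext => s t /=; rewrite addrC. Qed.
Lemma eadd0 : left_id ezero eadd.
Proof. by move=> p; apply: E_ext => s t /=; rewrite add0r. Qed.
Lemma eaddN : left_inverse ezero eopp eadd.
Proof. by move=> p; apply: E_ext => s t /=; rewrite addNr. Qed.

HB.instance Definition _ := GRing.isZmodule.Build Emod eaddA eaddC eadd0 eaddN.

Lemma escaleA a b p : escale a (escale b p) = escale (a * b) p.
Proof. by apply: E_ext => s t /=; rewrite mulrA. Qed.
Lemma escale1 : left_id 1 escale.
Proof. by move=> p; apply: E_ext => s t /=; rewrite mul1r. Qed.
Lemma escaleDr : right_distributive escale +%R.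
Proof. by move=> a p q; apply: E_ext. Qed.
Lemma escaleDl p : {morph escale^~ p : a b / a + b}.
Proof. by move=> a b; apply: E_ext => s t /=; rewrite mulrDl efD. Qed.

HB.instance Definition _ := GRing.Zmodule_isLmodule.Build R^c Emod escaleA escale1 escaleDr escaleDl.

Lemma efE_add (p q : Emod) s t : ef (p + q) s t = ef p s t + ef q s t. Proof. by []. Qed.
Lemma efE_opp (p : Emod) s t : ef (- p) s t = - ef p s t. Proof. by []. Qed.
Lemma efE_scale (a : R^c) (p : Emod) s t : ef (a *: p) s t = ef p (@GRing.mul R a s) t.
Proof. by []. Qed.

End Inj.

Section Main.
Variable R : nzRingType.

Lemma addon_all (C D : zmodType) (g : C -> D) :
  (forall x y, g (x - y) = g x - g y) -> forall x y, g (x + y) = g x + g y.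
Proof.
move=> gA x y.
have sT : subgrp (fun _ : C => True) by split.
have hT : addon (fun _ : C => True) g by move=> *; apply: gA.
exact: (ahD sT hT).
Qed.

Lemma Emod_injective : injective_module (Emod R).
Proof.
move=> X C i ii f.
pose B c := exists x, i x = c.
pose F (t : R) (c : C) : QZ :=
  if pselect (B c) is left H then ef (f (sval (cid H))) 1 t else 0.
have FE : forall t x, F t (i x) = ef (f x) 1 t.
  move=> t x; rewrite /F; case: pselect => [H|H]; last by exfalso; apply: H; exists x.
  by case: (cid H) => x' /= /ii ->.
have sB : subgrp B.
  split; first by exists 0; rewrite linear0.
  by move=> _ _ [x <-] [y <-]; exists (x - y); rewrite linearB.
have hB : forall t, addon B (F t).
  move=> t _ _ [x <-] [y <-]; rewrite -linearB !FE linearB.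
  by rewrite efE_add efE_opp.
have H : forall t, exists g : C -> QZ,
    (forall x y, g (x - y) = g x - g y) /\ forall x, B x -> g x = F t x.
  by move=> t; apply: (ext_thm QZ_div sB (hB t)).
pose gt t := sval (cid (H t)).
have gtA : forall t x y, gt t (x - y) = gt t x - gt t y.
  by move=> t; case: (svalP (cid (H t))).
have gtB : forall t x, B x -> gt t x = F t x.
  by move=> t; case: (svalP (cid (H t))).
have gtD := fun t => addon_all (gtA t).
have gP : forall c x y t, gt t ((x - y : R^c) *: c) = gt t ((x : R^c) *: c) - gt t ((y : R^c) *: c).
  by move=> c x y t; rewrite scalerBl gtA.
pose gf c := @MkE R (fun s t => gt t ((s : R^c) *: c)) (gP c).
have gl : linear gf.
  move=> a c c'; apply: E_ext => s t.
  rewrite efE_add efE_scale /= scalerDr scalerA gtD; done.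
exists (mklin gl) => x; apply: E_ext => s t /=.
rewrite -linearZ gtB; last by exists ((s : R^c) *: x).
by rewrite FE linearZ efE_scale mulr1.
Qed.

Lemma Emod_embed : exists j : {linear RR R -> Emod R}, injective j.
Proof.
case: (cogen R) => chi [chiA chiS].
have jP : forall r : R, forall x y t, chi t (r * (x - y)) = chi t (r * x) - chi t (r * y).
  by move=> r x y t; rewrite mulrBr chiA.
have chiD := fun t => addon_all (chiA t).
pose jf (r : RR R) := @MkE R (fun s t => chi t (@GRing.mul R r s)) (jP r).
have jl : linear jf.
  move=> a r r'; apply: E_ext => s t.
  rewrite efE_add efE_scale /=.

  by rewrite mulrDl chiD mulrA.
exists (mklin jl) => r r' /= e.
have := congr1 (fun p : Emod R => @ef R p 1 (r - r' : R)) e => /=.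
rewrite !mulr1 => E1.
apply/eqP; rewrite -subr_eq0; apply: contraT => /chiS.
by rewrite chiA E1 subrr eqxx.
Qed.

End Main.

Section Final.
Variable R : nzRingType.

Lemma lin_act (M : rmodType R) (x : M) : linear (fun r : RR R => (r : R^c) *: x).
Proof. by move=> a r r'; rewrite scalerDl -scalerA. Qed.

Lemma RR_proj : projective_module (RR R).
Proof.
move=> B C p ps f; case: (ps (f 1)) => b pb.
exists (mklin (lin_act b)) => x /=.
have e : ((x : R^c) *: (1 : RR R)) = x by apply: mulr1.
by rewrite linearZ pb -[in RHS]e linearZ.
Qed.

Lemma lin_comp (X Y Z : rmodType R) (g : {linear Y -> Z}) (h : {linear X -> Y}) :
  linear (fun x => g (h x)).
Proof. by move=> a x y; rewrite !linearP. Qed.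

Lemma prod_inj (A B : rmodType R) :
  injective_module A -> injective_module B -> injective_module (A * B)%type.
Proof.
move=> IA IB X C i ii f.
have l1 : linear (fun x => (f x).1) by move=> a x y; rewrite linearP.
have l2 : linear (fun x => (f x).2) by move=> a x y; rewrite linearP.
case: (IA _ _ i ii (mklin l1)) => g1 h1.
case: (IB _ _ i ii (mklin l2)) => g2 h2.
have l : linear (fun c => (g1 c, g2 c)) by move=> a c c'; rewrite !linearP.
exists (mklin l) => x /=; rewrite h1 h2 /=; by case: (f x).
Qed.

Lemma L13 :
  (forall M : rmodType R, finite_length M ->
          exists E : rmodType R, injective_module E /\
            exists p : {linear E -> M}, forall m, exists e, p e = m) ->
  (forall P : rmodType R, projective_module P ->
          forall A : rmodType R, finite_length A -> InInv P A).
Proof.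
move=> H1 P Pp A Afl C i ii f.
case: (H1 A Afl) => E [Einj [p ps]].
case: (Pp _ _ p ps f) => g pg.
case: (Einj _ _ i ii g) => h hg.
by exists (mklin (lin_comp p h)) => x /=; rewrite hg pg.
Qed.

Lemma L21 :
  (forall A : rmodType R, finite_length A -> InInv (RR R) A) ->
  (forall M : rmodType R, finite_length M ->
          exists E : rmodType R, injective_module E /\
            exists p : {linear E -> M}, forall m, exists e, p e = m).
Proof.
move=> H2 M Mfl.
have Mfl' := Mfl.
case: Mfl' => n [S [Ssub S0 Sn Sstep]].
case: (Emod_embed R) => j jinj.
suff: forall k, (k <= n)%N -> exists E : rmodType R, injective_module E /\
    exists p : {linear E -> M}, forall y, S k y -> exists e, p e = y.
  move=> /(_ n (leqnn n)) [E [Ei [p pS]]]; exists E; split => //; exists p => m.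
  exact: pS.
elim=> [|k IH] kn.
  have l0 : linear (fun _ : Emod R => (0 : M)) by move=> a u v /=; rewrite scaler0 addr0.
  exists (Emod R); split; first exact: Emod_injective.
  by exists (mklin l0) => y /S0 ->; exists 0.
case: (IH (ltnW kn)) => E [Ei [p pS]].
case: (Sstep k kn) => [[inclk [x [Sx nSx]]] maxk].
case: (H2 M Mfl (Emod R) j jinj (mklin (lin_act x))) => q qj.
have l' : linear (fun e : (E * Emod R)%type => p e.1 + q e.2).
  by move=> a [e1 e2] [f1 f2] /=; rewrite !linearP scalerDr addrACA.
exists (E * Emod R)%type; split; first by apply: prod_inj => //; exact: Emod_injective.
exists (mklin l').
pose T y := S k.+1 y /\ exists e, p e.1 + q e.2 = y.
have Tsub : is_submod T.
  split.
    split; first by case: (Ssub k.+1).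
    by exists 0; rewrite /= !linear0 addr0.
  move=> a y y' [Sy [e ey]] [Sy' [e' ey']]; split.
    by case: (Ssub k.+1) => _; apply.
  exists (a *: e + e') => /=; rewrite !linearP -ey -ey' scalerDr addrACA //.
have ST : incl (S k) T.
  move=> y Sy; split; first exact: inclk.
  case: (pS y Sy) => e pe; exists (e, 0); by rewrite /= linear0 addr0.
case: (maxk T Tsub ST (fun y Ty => Ty.1)) => [TS|ST'].
  exfalso; apply: nSx; apply: TS; split => //.
  exists (0, j 1); rewrite /= linear0 add0r qj /=; exact: scale1r.
by move=> y /ST' [_ [e ey]]; exists e.
Qed.

End Final.

Theorem mainTheorem11 (R : nzRingType) :
  [<-> (forall M : rmodType R, finite_length M ->
          exists E : rmodType R, injective_module E /\
            exists p : {linear E -> M}, forall m, exists e, p e = m);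
       (forall A : rmodType R, finite_length A -> InInv (RR R) A);
       (forall P : rmodType R, projective_module P ->
          forall A : rmodType R, finite_length A -> InInv P A)].
Proof.
tfae=> [H1|H2|H3].
- by move=> A Afl; apply: (L13 H1) => //; exact: RR_proj.
- by apply: L13; apply: L21.
- by apply: L21 => A Afl; apply: H3 => //; exact: RR_proj.
Qed.
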